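(* Let $\mathbb{G}$ be a Carnot group of step 2 equipped with a strongly homogeneous norm $\|\cdot\|$, and let $K:\mathbb{G}\setminus\{\mathbf0\}\to\mathbb{R}^d$ be a $(Q-1)$-dimensional Calderón–Zygmund kernel with parameters $\beta$ and $\kappa$. Then there exists $C\ge1$ depending on $\kappa$ and $\beta$ such that $$|K(q^{-1}\cdot p_1)-K(q^{-1}\cdot p_2)|+|K(p_1^{-1}\cdot q)-K(p_2^{-1}\cdot q)|\lesssim\frac{\|p_2^{-1}\cdot p_1\|^{\beta/2}}{\|q^{-1}\cdot p_1\|^{Q-1+\beta/2}}$$ for all $q\in\mathbb{G}$ and $p_1,p_2\in\mathbb{G}\setminus\{q\}$ with $d(p_1,p_2)\le d(p_1,q)/C$.
   Context: Step-2 Carnot group: $\mathbb{G}\cong\mathfrak v_1\oplus\mathfrak v_2\cong\mathbb{R}^N$ in exponential coordinates, $(x,z)\cdot(x',z')=(x+x',z+z'+\tfrac12[x,x'])$, $[\mathfrak v_1,\mathfrak v_1]=\mathfrak v_2$, $\delta_t(x,z)=(tx,t^2z)$, $Q=\dim\mathfrak v_1+2\dim\mathfrak v_2$. Strongly homogeneous norm: continuous, $\|\delta_tp\|=|t|\|p\|$ for $t\in\mathbb{R}$, $\|p\|=0$ iff $p=\mathbf0$; $d(p,q)=\|q^{-1}p\|$. $K$ continuous is a $(Q-1)$-dimensional Calderón–Zygmund kernel with parameters $\kappa\in(0,1)$, $\beta\in(0,1]$ if there is $C_K\ge1$ with $|K(p)|\le C_K\|p\|^{1-Q}$ for $p\ne\mathbf0$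 and $|K(p_1)-K(p_2)|\le C_K\|p_2^{-1}p_1\|^\beta/\|p_1\|^{Q-1+\beta}$ whenever $p_1,p_2\ne\mathbf0$, $d(p_1,p_2)\le\kappa\|p_1\|$. The implicit constant in $\lesssim$ is independent of $q,p_1,p_2$. *)

(* Defs.v *)
From HB Require Import structures.
From mathcomp Require Import all_boot all_order all_algebra.
From mathcomp Require Import all_classical all_reals all_analysis.
Set Implicit Arguments. Unset Strict Implicit. Unset Printing Implicit Defensive.
Import Order.TTheory GRing.Theory Num.Theory.
Import numFieldNormedType.Exports.
Local Open Scope classical_set_scope.
Local Open Scope ring_scope.

Section Carnot.
Variables (R : realType) (m n : nat).

(* Points of G = v1 (+) v2 = R^m x R^n in exponential coordinates. *)
Definition pt := ('rV[R]_m * 'rV[R]_n)%type.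

Definition origin : pt := (0, 0).

Definition gmul (B : 'rV[R]_m -> 'rV[R]_m -> 'rV[R]_n) (p q : pt) : pt :=
  (p.1 + q.1, p.2 + q.2 + 2^-1 *: B p.1 q.1).

Definition ginv (p : pt) : pt := (- p.1, - p.2).

Definition dil (t : R) (p : pt) : pt := (t *: p.1, t ^+ 2 *: p.2).

Definition homdim : R := (m + 2 * n)%N%:R.

(* B is the Lie bracket v1 x v1 -> v2 of a step-2 stratified Lie algebra:
   bilinear, skew-symmetric, and [v1,v1] spans v2. *)
Definition step2_bracket (B : 'rV[R]_m -> 'rV[R]_m -> 'rV[R]_n) : Prop :=
  [/\ (forall (a : R) x y z, B (a *: x + y) z = a *: B x z + B y z),
      (forall x y, B x y = - B y x) &
      (forall w : 'rV[R]_n, exists (k : nat) (xs ys : 'I_k -> 'rV[R]_m),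
          w = \sum_(i < k) B (xs i) (ys i))].

Definition strongly_homogeneous_norm (B : 'rV[R]_m -> 'rV[R]_m -> 'rV[R]_n)
    (N : pt -> R) : Prop :=
  [/\ continuous N,
      (forall p, 0 <= N p),
      (forall (t : R) p, N (dil t p) = `|t| * N p) &
      (forall p, N p = 0 <-> p = origin)].

Definition enorm (d : nat) (v : 'rV[R]_d) : R :=
  Num.sqrt (\sum_(i < d) v ord0 i ^+ 2).

Definition CZ_kernel (B : 'rV[R]_m -> 'rV[R]_m -> 'rV[R]_n) (N : pt -> R)
    (d : nat) (kappa beta : R) (K : pt -> 'rV[R]_d) : Prop :=
  [/\ 0 < kappa < 1, 0 < beta <= 1,
      {within [set p | p <> origin], continuous K} &
      exists CK : R, 1 <= CK /\
        (forall p, p <> origin ->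
           enorm (K p) <= CK * N p `^ (1 - homdim)) /\
        (forall p1 p2, p1 <> origin -> p2 <> origin ->
           N (gmul B (ginv p2) p1) <= kappa * N p1 ->
           enorm (K p1 - K p2) <=
             CK * N (gmul B (ginv p2) p1) `^ beta
                / N p1 `^ (homdim - 1 + beta))].

End Carnot.

(* Main.v *)
Require Import Defs.
From HB Require Import structures.
From mathcomp Require Import all_boot all_order all_algebra.
From mathcomp Require Import all_classical all_reals all_analysis.
Import Order.TTheory GRing.Theory Num.Theory.
Import numFieldNormedType.Exports.
From mathcomp Require Import lra ring.
Local Open Scope ring_scope.
Local Open Scope classical_set_scope.
Lemma entry_le (R : realType) (k : nat) (x : 'rV[R]_k) i : `|x 0 i| <= `|x|.
Proof.
rewrite [leRHS]mx_normrE; apply/bigmax_geP; right => /=.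
by exists (ord0, i).
Qed.

Section Blem.
Variables (R : realType) (m n : nat) (B : 'rV[R]_m -> 'rV[R]_m -> 'rV[R]_n).
Variable (hB : step2_bracket B).

Lemma BDl x y z : B (x + y) z = B x z + B y z.
Proof. by case: hB => L _ _; rewrite -[x in LHS]scale1r L scale1r. Qed.
Lemma B0l z : B 0 z = 0.
Proof. by apply: (addrI (B 0 z)); rewrite [RHS]addr0 -BDl addr0. Qed.
Lemma BZl a x z : B (a *: x) z = a *: B x z.
Proof. by case: hB => L _ _; rewrite -[a *: x]addr0 L B0l addr0. Qed.
Lemma BNl x z : B (- x) z = - B x z.
Proof. by rewrite -scaleN1r BZl scaleN1r. Qed.
Lemma Bskew x y : B x y = - B y x.
Proof. by case: hB. Qed.
Lemma BDr x y z : B z (x + y) = B z x + B z y.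
Proof. by rewrite Bskew BDl opprD -!Bskew. Qed.
Lemma BNr x z : B z (- x) = - B z x.
Proof. by rewrite Bskew BNl opprK -Bskew. Qed.
Lemma BZr a x z : B z (a *: x) = a *: B z x.
Proof. by rewrite Bskew BZl -scalerN -Bskew. Qed.
Lemma Bxx x : B x x = 0.
Proof.
have h : B x x + B x x = 0 by rewrite {1}Bskew addNr.
have : (2 : R) *: B x x = 0 by rewrite scaler_nat mulr2n.
by move/eqP; rewrite scaler_eq0 pnatr_eq0 /= => /eqP.
Qed.
Lemma Bsuml k (f : 'I_k -> 'rV[R]_m) y :
  B (\sum_(i < k) f i) y = \sum_(i < k) B (f i) y.
Proof. exact: (big_morph (fun x => B x y) (fun a b => BDl a b y) (B0l y)). Qed.

Lemma B0r z : B z 0 = 0.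
Proof. by rewrite Bskew B0l oppr0. Qed.
Lemma Bsumr k (f : 'I_k -> 'rV[R]_m) y :
  B y (\sum_(i < k) f i) = \sum_(i < k) B y (f i).
Proof. exact: (big_morph (fun x => B y x) (fun a b => BDr a b y) (B0r y)). Qed.

Lemma Bbound : exists c : R, 0 <= c /\ forall x y, `|B x y| <= c * `|x| * `|y|.
Proof.
exists (\sum_(i < m) \sum_(j < m) `|B 'e_i 'e_j|); split.
  by apply: sumr_ge0 => i _; apply: sumr_ge0.
move=> x y.
rewrite {1}(row_sum_delta x) Bsuml.
under eq_bigr => i _ do rewrite BZl {1}(row_sum_delta y) Bsumr scaler_sumr.
rewrite mulr_suml mulr_suml.
apply: le_trans (ler_norm_sum _ _ _) _; apply: ler_sum => i _.
apply: le_trans (ler_norm_sum _ _ _) _.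
rewrite mulr_suml mulr_suml; apply: ler_sum => j _.
rewrite BZr normrZ normrZ.
have h1 := @entry_le _ _ x i; have h2 := @entry_le _ _ y j.
have h3 : 0 <= `|B 'e_i 'e_j| by [].
have h4 : 0 <= `|x 0 i| by [].
have h5 : 0 <= `|y 0 j| by [].
have h6 := ler_pM h4 h5 h1 h2.
rewrite mulrA; apply: le_trans (ler_wpM2r h3 h6) _.
by rewrite le_eqVlt; apply/orP; left; apply/eqP; ring.
Qed.
Lemma idI1 q p1 p2 : gmul B (ginv (gmul B (ginv q) p2)) (gmul B (ginv q) p1) = gmul B (ginv p2) p1.
Proof.
case: q p1 p2 => [q1 q2] [a1 a2] [b1 b2]; rewrite /gmul /ginv /=.
congr (_, _); apply/rowP => j.
  by rewrite !mxE; ring.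
rewrite !(BDl, BDr, BNl, BNr, Bxx, opprK, BZl, BZr).
rewrite (Bskew b1 q1).
rewrite !mxE. ring.
Qed.
Lemma idI2 q p : gmul B (ginv p) q = ginv (gmul B (ginv q) p).
Proof.
case: q p => [q1 q2] [a1 a2]; rewrite /gmul /ginv /=.
congr (_, _); apply/rowP => j.
  by rewrite !mxE; ring.
rewrite !(BDl, BDr, BNl, BNr, Bxx, opprK, BZl, BZr).
rewrite (Bskew a1 q1).
rewrite !mxE. ring.
Qed.
Lemma idI3 q p1 p2 :
  gmul B (ginv (gmul B (ginv p2) q)) (gmul B (ginv p1) q) =
  (- (gmul B (ginv p2) p1).1,
   - (gmul B (ginv p2) p1).2 + B (gmul B (ginv p2) p1).1 (gmul B (ginv q) p1).1).
Proof.
case: q p1 p2 => [q1 q2] [a1 a2] [b1 b2]; rewrite /gmul /ginv /=.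
congr (_, _); apply/rowP => j.
  by rewrite !mxE; ring.
rewrite !(BDl, BDr, BNl, BNr, Bxx, opprK, BZl, BZr).
rewrite (Bskew a1 q1) (Bskew b1 q1) ?(Bskew a1 b1) !addr0 !opprK. rewrite !mxE. by field.
Qed.
Lemma idnz q p : p <> q -> gmul B (ginv q) p <> origin R m n.
Proof.
case: q p => [q1 q2] [a1 a2]; rewrite /gmul /ginv /origin /= => ne [].
move/eqP; rewrite addrC subr_eq0 => /eqP e1; subst a1.
rewrite BNl Bxx oppr0 scaler0 addr0 => /eqP; rewrite addrC subr_eq0 => /eqP e2. by subst a2; apply: ne.
Qed.
End Blem.
Lemma Nupper (R : realType) m n B (N : pt R m n -> R) :
  strongly_homogeneous_norm B N ->
  exists b, 0 < b /\ forall p, N p <= b * (`|p.1| + Num.sqrt `|p.2|).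
Proof.
case=> hc h0 hd hz.
have N0 : N (origin R m n) = 0 by apply/hz.
have : \forall p \near (origin R m n), N p < 1.
  have h1 : N (origin R m n) < 1 by rewrite N0.
  have := @cvgr_lt R _ _ _ N _ (hc (origin R m n)) 1 h1.
  by apply.
move=> /nbhs_ballP [e e0 he].
have [mu [mu0 [mue mu1]]] : exists mu : R, [/\ 0 < mu, mu <= e & mu <= 1].
  exists (Num.min e 1); split; rewrite ?lt_min ?e0 ?ltr01 // ge_min lexx ?orbT //.
set e' := mu / 2.
have e'0 : 0 < e' by rewrite /e'; lra.
have e'e : e' < e by rewrite /e'; lra.
have e'1 : e' <= 1/2 by rewrite /e'; lra.
exists e'^-1; split; first by rewrite invr_gt0.
case=> x z /=.
set s := Num.sqrt `|z|.
have s0 : 0 <= s by apply: sqrtr_ge0.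
have x0 : 0 <= `|x| by [].
have [G0|Gp] := eqVneq (`|x| + s) 0.
  have hx : `|x| = 0 by lra.
  have hs : s = 0 by lra.
  rewrite G0 mulr0.
  move: hx => /eqP; rewrite normr_eq0 => /eqP ->.
  move: hs => /eqP; rewrite sqrtr_eq0 normr_le0 => /eqP ->.
  by rewrite -/(origin R m n) N0.
have G0 : 0 < `|x| + s by rewrite lt_neqAle eq_sym Gp /=; lra.
set t := e' / (`|x| + s).
have t0 : 0 < t by rewrite divr_gt0.
have tG : t * (`|x| + s) = e' by rewrite /t divfK // gt_eqF.
have hb : ball (origin R m n) e (dil t (x, z)).
  rewrite -ball_normE /ball_ /= /origin /dil /=.
  rewrite sub0r normrN.
  change (Num.max `|t *: x| `|t ^+ 2 *: z| < e).
  have n1 : `|t *: x| = t * `|x| by rewrite normrZ (gtr0_norm t0).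
  have n2 : `|t ^+ 2 *: z| = t ^+ 2 * `|z|.
    by rewrite normrZ ger0_norm // exprn_ge0 // ltW.
  rewrite gt_max n1 n2; apply/andP; split.
    have : t * s >= 0 by apply: mulr_ge0; lra.
    nra.
  have hz2 : `|z| = s ^+ 2 by rewrite sqr_sqrtr.
  rewrite hz2.
  have : t * s <= e' by nra.
  have : 0 <= t * s by apply: mulr_ge0; lra.
  nra.
have := he _ hb; rewrite /= hd (gtr0_norm t0) => h.
have : N (x, z) * t < 1 by rewrite mulrC.
rewrite -ltr_pdivlMr // /t invf_div => h2.
apply: ltW; apply: (lt_le_trans h2).
by rewrite mul1r mulrC.
Qed.
Lemma ball1_compact (R : realType) k : compact [set u : 'rV[R]_k | `|u| <= 1].
Proof.
apply: bounded_closed_compact.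
  rewrite /= /bounded_near; near=> M => u /= hu.
  apply: le_trans hu _; near: M; apply: nbhs_pinfty_ge; exact: num_real.
apply: (@preimage_closed _ _ (fun u : 'rV[R]_k => `|u|) [set x : R | x <= 1]); last exact: closed_le.
by move=> x _; apply: norm_continuous.
Unshelve. all: by end_near.
Qed.

Lemma Nlower (R : realType) m n B (N : pt R m n -> R) :
  strongly_homogeneous_norm B N ->
  exists a, 0 < a /\ forall p, `|p.1| <= a * N p /\ Num.sqrt `|p.2| <= a * N p.
Proof.
case=> hc h0 hd hz.
have N0 : N (origin R m n) = 0 by apply/hz.
pose S := [set p : pt R m n | `|p| = 1].
have cS : closed S.
  apply: (@preimage_closed _ _ (fun u : pt R m n => `|u|) [set x : R | x = 1]); last exact: closed_eq.
  by move=> x _; apply: norm_continuous.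
have kS : compact S.
  apply: (subclosed_compact cS (compact_setX (ball1_compact R m) (ball1_compact R n))).
  move=> p /= hp; rewrite -hp; split.
    by change (`|p.1| <= Num.max `|p.1| `|p.2|); rewrite le_max lexx.
  by change (`|p.2| <= Num.max `|p.1| `|p.2|); rewrite le_max lexx orbT.
have SN : forall p, S p -> N p != 0.
  move=> p Sp; apply/eqP => /hz e; move: Sp; rewrite /S /= e /origin.
  by change (Num.max `|0 : 'rV[R]_m| `|0 : 'rV[R]_n| = 1 -> False); rewrite !normr0 maxxx => /eqP; rewrite eq_sym oner_eq0.
have cf : {within S, continuous (fun p => (N p)^-1)}.
  apply: continuous_in_subspaceT => p; rewrite inE => Sp.
  exact: (cvgV (SN p Sp) (hc p)).
have := compact_bounded (continuous_compact cf kS).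
move=> /= Hb; have [M HM] := filter_ex (F:=(+oo : set_system R)) Hb.
exists (Num.max M 1); split; first by rewrite lt_max ltr01 orbT.
have HM' : forall p, S p -> (N p)^-1 <= M.
  move=> p Sp; have := HM _ (ex_intro2 _ _ p Sp erefl) => /= h.
  exact: le_trans (ler_norm _) h.
have key : forall x z, Num.max `|x| (Num.sqrt `|z|) <= Num.max M 1 * N (x, z).
  move=> x z.
  set s := Num.sqrt `|z|.
  have s0 : 0 <= s by apply: sqrtr_ge0.
  have hz2 : `|z| = s ^+ 2 by rewrite sqr_sqrtr.
  set G := Num.max `|x| s.
  have xG : `|x| <= G by rewrite le_max lexx.
  have sG : s <= G by rewrite le_max lexx orbT.
  have [G0|Gp] := eqVneq G 0.
    rewrite G0; apply: mulr_ge0 => //; rewrite le_max ler01 orbT //.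
  have G0 : 0 < G by rewrite lt_neqAle eq_sym Gp /=; apply: le_trans xG.
  set t := G^-1.
  have t0 : 0 < t by rewrite invr_gt0.
  have tG : t * G = 1 by rewrite mulVf.
  have n1 : `|t *: x| = t * `|x| by rewrite normrZ (gtr0_norm t0).
  have n2 : `|t ^+ 2 *: z| = t ^+ 2 * `|z|.
    by rewrite normrZ ger0_norm // exprn_ge0 // ltW.
  have Sp : S (dil t (x, z)).
    rewrite /S /dil /=.
    change (Num.max `|t *: x| `|t ^+ 2 *: z| = 1).
    rewrite n1 n2 hz2; apply/le_anti/andP; split.
      have h1 := ler_wpM2l (ltW t0) xG.
      have h2 := ler_wpM2l (ltW t0) sG.
      have h3 : 0 <= t * s by apply: mulr_ge0; lra.
      rewrite ge_max; apply/andP; split; first lra.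
      have -> : t ^+ 2 * s ^+ 2 = (t * s) ^+ 2 by rewrite exprMn.
      rewrite expr2; nra.
    rewrite le_max; have [h|h] := leP `|x| s.
      have Gs : G = s by rewrite /G max_r.
      apply/orP; right; rewrite -Gs -exprMn tG expr1n //.
    have Gs : G = `|x| by rewrite /G max_l // ltW.
    apply/orP; left; rewrite -Gs tG //.
  have := HM' _ Sp; rewrite hd (gtr0_norm t0).
  have Np : 0 < N (x, z).
    rewrite lt_neqAle h0 andbT eq_sym; apply/eqP => /hz [ex ez].
    by move: Gp; rewrite /G /s ex ez !normr0 sqrtr0 maxxx eqxx.
  rewrite invfM /t invrK => h.
  rewrite -ler_pdivrMr //; apply: le_trans h _.
  by rewrite le_max lexx.
move=> [x z] /=; have := key x z; rewrite ge_max => /andP [] k1 k2.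
have k3 : `|x| <= Num.max `|x| (Num.sqrt `|z|) by rewrite le_max lexx.
have k4 : Num.sqrt `|z| <= Num.max `|x| (Num.sqrt `|z|) by rewrite le_max lexx orbT.
by split.
Qed.

Lemma aux1 (R : realType) (X Y YE : R) :
  0 <= X -> X <= Y -> 0 < Y -> 0 < YE -> X * X / (YE * Y) <= X / YE.
Proof.
move=> X0 XY Y0 YE0.
have -> : X * X / (YE * Y) = X / YE * (X / Y).
  by field; apply/andP; split; apply: lt0r_neq0.
apply: ler_piMr; first by apply: divr_ge0 => //; apply: ltW.
by rewrite ler_pdivrMr // mul1r.
Qed.

Lemma aux2 (R : realType) (Vb Zr Yr YE Y X Lb cr : R) :
  0 <= Vb -> 0 < Zr -> 0 < YE -> 0 < Y -> Yr = YE * Y -> 0 <= X -> 0 <= Lb -> 0 < cr ->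
  Vb <= Lb * X * Y -> Yr <= cr * Zr -> Vb / Zr <= Lb * cr * X / YE.
Proof.
move=> V0 Z0 YE0 Y0 -> X0 L0 c0 hV hY.
have K0 : 0 <= Lb * X * Y by apply: mulr_ge0; [apply: mulr_ge0|apply: ltW].
apply: (@le_trans _ _ (Lb * X * Y / Zr)).
  by apply: ler_wpM2r => //; rewrite invr_ge0 ltW.
have -> : Lb * cr * X / YE = (Lb * X * Y) * (cr / (YE * Y)).
  by field; apply/andP; split; apply: lt0r_neq0.
apply: ler_wpM2l => //.
by rewrite ler_pdivlMr ?mulr_gt0 // mulrC ler_pdivrMr.
Qed.

Lemma ginv_nz (R : realType) m n (P : pt R m n) : P <> origin R m n -> ginv P <> origin R m n.
Proof.
case: P => [u v]; rewrite /ginv /origin => ne [] /eqP; rewrite oppr_eq0 => /eqP eu /eqP.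
by rewrite oppr_eq0 => /eqP ev; apply: ne; rewrite eu ev.
Qed.

Theorem lemma2p16 (R : realType) (m n d : nat)
    (B : 'rV[R]_m -> 'rV[R]_m -> 'rV[R]_n) (N : pt R m n -> R)
    (kappa beta : R) :
  step2_bracket B -> strongly_homogeneous_norm B N ->
  0 < kappa < 1 -> 0 < beta <= 1 ->
  exists C : R, 1 <= C /\
    forall K : pt R m n -> 'rV[R]_d, CZ_kernel B N kappa beta K ->
    exists A : R, 0 < A /\
      forall q p1 p2 : pt R m n, p1 <> q -> p2 <> q ->
        N (gmul B (ginv p2) p1) <= N (gmul B (ginv q) p1) / C ->
        enorm (K (gmul B (ginv q) p1) - K (gmul B (ginv q) p2))
        + enorm (K (gmul B (ginv p1) q) - K (gmul B (ginv p2) q))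
        <= A * N (gmul B (ginv p2) p1) `^ (beta / 2)
             / N (gmul B (ginv q) p1) `^ (homdim R m n - 1 + beta / 2).
Proof.
move=> hB hN /andP [k0 k1] /andP [b0' b1].
have [a [a0 ha]] := Nlower _ _ _ _ _ hN.
have [b [b0 hbnd]] := Nupper _ _ _ _ _ hN.
have [cB [cB0 hcB]] := Bbound _ _ _ _ hB.
have hN' := hN; case: hN' => _ h0 _ hz.
have Npos : forall p, p <> origin R m n -> 0 < N p.
  move=> p hp; rewrite lt_neqAle h0 andbT eq_sym; apply/eqP => /hz.
  exact: hp.
set c0 := 2 * a * b.
have c00 : 0 < c0 by rewrite /c0 !mulr_gt0.
set L2 := 2 * b ^+ 2 * a ^+ 2 * (2 + cB).
have L20 : 0 < L2 by rewrite /L2 !mulr_gt0 // ?exprn_gt0 //; lra.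
set C := 1 + kappa^-1 + L2 * c0 ^+ 2 / kappa ^+ 2.
have ki0 : 0 < kappa^-1 by rewrite invr_gt0.
have T0 : 0 < L2 * c0 ^+ 2 / kappa ^+ 2.
  by apply: mulr_gt0; [apply: mulr_gt0 => //; apply: exprn_gt0|rewrite invr_gt0; apply: exprn_gt0].
have C1 : 1 <= C by rewrite /C; lra.
have C0 : 0 < C by lra.
have Ck : kappa^-1 <= C by rewrite /C; lra.
have CL : L2 * c0 ^+ 2 <= kappa ^+ 2 * C.
  have : L2 * c0 ^+ 2 / kappa ^+ 2 <= C by rewrite /C; lra.
  by rewrite [kappa ^+ 2 * C]mulrC -ler_pdivrMr // exprn_gt0.
exists C; split => //.
move=> K [_ _ _ [CK [CK1 [_ Kreg]]]].
set r := homdim R m n - 1 + beta.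
set E := homdim R m n - 1 + beta / 2.
exists (CK * (1 + L2 `^ (beta / 2) * c0 `^ r)); split.
  apply: mulr_gt0; first lra.
  have : 0 <= L2 `^ (beta / 2) * c0 `^ r by apply: mulr_ge0; apply: powR_ge0.
  lra.
move=> q p1 p2 h1 h2 hC.
have Q1 : 1 <= homdim R m n.
  rewrite /homdim ler1n lt0n; apply/negP.
  rewrite addn_eq0 muln_eq0 => /andP [/eqP m0 /orP [//|/eqP n0]].
  subst m n; apply: h1; clear -p1 q; case: p1 q => [u1 v1] [u2 v2].
  by congr pair; apply/rowP => j; have := ltn_ord j; rewrite ltn0.
have r0 : 0 <= r by rewrite /r; clear -Q1 b0'; lra.
have rE : r = E + beta / 2 by rewrite /r /E; clear; lra.
have P1nz := @idnz R m n B hB q p1 h1.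
have P2nz := @idnz R m n B hB q p2 h2.
have e1 := @idI1 R m n B hB q p1 p2.
have e2 := @idI2 R m n B hB q p1.
have e2' := @idI2 R m n B hB q p2.
have e3 := @idI3 R m n B hB q p1 p2.
set P1 := gmul B (ginv q) p1 in P1nz e1 e2 e3 hC *.
set P2 := gmul B (ginv q) p2 in P2nz e1 e2' *.
set w := gmul B (ginv p2) p1 in e1 e3 hC *.
set R1 := gmul B (ginv p1) q in e2 e3 *.
set R2 := gmul B (ginv p2) q in e2' e3 *.
have R1nz : R1 <> origin R m n by rewrite e2; apply: ginv_nz.
have R2nz : R2 <> origin R m n by rewrite e2'; apply: ginv_nz.
set V := (- w.1, - w.2 + B w.1 P1.1) in e3.
have T1 := Kreg P1 P2 P1nz P2nz; rewrite e1 -/r in T1.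
have T2 := Kreg R1 R2 R1nz R2nz; rewrite e3 -/r in T2.
set x := N w in hC T1 T2 *.
set y := N P1 in hC T1 *.
set z := N R1 in T2 *.
set v := N V in T2 *.
have y0 : 0 < y := Npos _ P1nz.
have z0 : 0 < z := Npos _ R1nz.
have x0 : 0 <= x := h0 _.
have v0 : 0 <= v := h0 _.
have xCy : x * C <= y by rewrite -ler_pdivlMr.
have xy : x <= y by clear -xCy C1 x0; nra.
have kC : 1 <= kappa * C.
  by have := ler_wpM2l (ltW k0) Ck; rewrite mulfV ?gt_eqF.
have xky : x <= kappa * y by clear -xCy kC x0 k0; nra.
have hyc : y <= c0 * z.
  have [ha1 ha2] := ha (ginv P1).
  have g1 : (ginv P1).1 = - P1.1 by [].
  have g2 : (ginv P1).2 = - P1.2 by [].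
  rewrite g1 g2 !normrN -e2 -/z in ha1 ha2.
  have hb1 := hbnd P1; rewrite -/y in hb1.
  have := ler_wpM2l (ltW b0) (lerD ha1 ha2).
  rewrite /c0 => hh; clear -hh hb1; lra.
have hv : v ^+ 2 <= L2 * x * y.
  have [hw1 hw2] := ha w; rewrite -/x in hw1 hw2.
  have [hP1 _] := ha P1; rewrite -/y in hP1.
  have hvb := hbnd V; rewrite -/v.
  have g1 : V.1 = - w.1 by [].
  have g2 : V.2 = - w.2 + B w.1 P1.1 by [].
  rewrite g1 g2 normrN in hvb.
  set u := `|- w.2 + B w.1 P1.1| in hvb.
  set sv := Num.sqrt u in hvb.
  have sv0 : 0 <= sv by apply: sqrtr_ge0.
  have svu : sv ^+ 2 = u by rewrite sqr_sqrtr // /u.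
  set s2 := Num.sqrt `|w.2| in hw2.
  have s20 : 0 <= s2 by apply: sqrtr_ge0.
  have s2u : s2 ^+ 2 = `|w.2| by rewrite sqr_sqrtr.
  have hu1 : u <= `|w.2| + cB * `|w.1| * `|P1.1|.
    apply: le_trans (ler_normD _ _) _; rewrite normrN lerD2l; exact: hcB.
  have w10 : 0 <= `|w.1| by [].
  have P10 : 0 <= `|P1.1| by [].
  have hu2 : `|w.2| <= (a * x) ^+ 2.
    by rewrite -s2u !expr2; apply: ler_pM.
  have hu3 : cB * `|w.1| * `|P1.1| <= cB * (a * x) * (a * y).
    rewrite -!mulrA; apply: ler_wpM2l => //.
    rewrite mulrA; apply: ler_pM => //.
  have hu : u <= a ^+ 2 * (1 + cB) * x * y.
    have : (a * x) ^+ 2 <= a ^+ 2 * x * y.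
      rewrite exprMn -mulrA; apply: ler_wpM2l; first exact: exprn_ge0 (ltW a0).
      by rewrite expr2; apply: ler_wpM2l.
    have : cB * (a * x) * (a * y) = cB * a ^+ 2 * x * y by ring.
    move=> e h; clear -e h hu1 hu2 hu3; lra.
  have hv1 : v <= b * (a * x + sv).
    apply: le_trans hvb _; apply: ler_wpM2l; first exact: ltW.
    by rewrite lerD2r.
  have hv2 : v ^+ 2 <= b ^+ 2 * (a * x + sv) ^+ 2.
    by rewrite -exprMn !expr2; apply: ler_pM.
  have hv3 : (a * x + sv) ^+ 2 <= 2 * ((a * x) ^+ 2 + sv ^+ 2).
    have := sqr_ge0 (a * x - sv); rewrite !expr2 => hh; clear -hh; lra.
  have hax : (a * x) ^+ 2 <= a ^+ 2 * x * y.
    rewrite exprMn -mulrA; apply: ler_wpM2l; first exact: exprn_ge0 (ltW a0).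
    by rewrite expr2; apply: ler_wpM2l.
  have hv4 : (a * x + sv) ^+ 2 <= 2 * a ^+ 2 * (2 + cB) * x * y.
    have : 2 * a ^+ 2 * (2 + cB) * x * y = 2 * (a ^+ 2 * x * y + a ^+ 2 * (1 + cB) * x * y) by ring.
    move=> e; clear -e hv3 hax hu svu; lra.
  apply: le_trans hv2 _.
  have -> : L2 * x * y = b ^+ 2 * (2 * a ^+ 2 * (2 + cB) * x * y) by rewrite /L2; ring.
  by apply: ler_wpM2l => //; apply: exprn_ge0; apply: ltW.
have vkz : v <= kappa * z.
  have s1 : v ^+ 2 * C <= L2 * y ^+ 2.
    apply: le_trans (ler_wpM2r (ltW C0) hv) _.
    have -> : L2 * x * y * C = (L2 * y) * (x * C) by ring.
    rewrite expr2 [L2 * (y * y)]mulrA; apply: ler_wpM2l => //.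
    by apply: mulr_ge0; apply: ltW.
  have s2 : y ^+ 2 <= c0 ^+ 2 * z ^+ 2.
    by rewrite -exprMn !expr2; apply: ler_pM => //; apply: ltW.
  have s3 : v ^+ 2 * C <= kappa ^+ 2 * C * z ^+ 2.
    apply: le_trans s1 _.
    apply: (@le_trans _ _ (L2 * (c0 ^+ 2 * z ^+ 2))).
      by apply: ler_wpM2l => //; apply: ltW.
    rewrite mulrA; apply: ler_wpM2r => //; exact: exprn_ge0 (ltW z0).
  have s4 : v ^+ 2 <= (kappa * z) ^+ 2.
    rewrite exprMn -(ler_pM2r C0); apply: le_trans s3 _.
    by rewrite mulrAC.
  have kz0 : 0 <= kappa * z by apply: mulr_ge0; apply: ltW.
  by move: s4; rewrite ler_pXn2r // ?nnegrE.
have T1' := T1 xky.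
have T2' := T2 vkz.
set X := x `^ (beta / 2).
set Y := y `^ (beta / 2).
set YE := y `^ E.
have Y0 : 0 < Y by apply: powR_gt0.
have YE0 : 0 < YE by apply: powR_gt0.
have X0 : 0 <= X by apply: powR_ge0.
have XY : X <= Y.
  apply: ge0_ler_powR; [by clear -b0'; lra|by rewrite nnegrE|by rewrite nnegrE ltW|exact: xy].
have eyr : y `^ r = YE * Y.
  rewrite rE powRD //; apply/implyP => _; exact: lt0r_neq0.
have exb : x `^ beta = X * X.
  rewrite -powRD; first by congr (_ `^ _); field.
  by apply/implyP => /eqP h; exfalso; clear -h b0'; lra.
have t1 : x `^ beta / y `^ r <= X / YE.
  by rewrite exb eyr; apply: aux1.
have hV : v `^ beta <= L2 `^ (beta / 2) * X * Y.
  have -> : v `^ beta = (v `^ 2) `^ (beta / 2).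
    by rewrite -powRrM; congr (_ `^ _); field.
  rewrite powR_mulrn //.
  have -> : L2 `^ (beta / 2) * X * Y = (L2 * x * y) `^ (beta / 2).
    have L20' : 0 <= L2 := ltW L20.
    by rewrite (powRM _ (mulr_ge0 L20' x0) (ltW y0)) (powRM _ L20' x0).
  apply: ge0_ler_powR; [by clear -b0'; lra|by rewrite nnegrE exprn_ge0| |exact: hv].
  by rewrite nnegrE; apply: mulr_ge0; [apply: mulr_ge0 => //; apply: ltW|apply: ltW].
have hY : y `^ r <= c0 `^ r * z `^ r.
  rewrite -powRM; [|apply: ltW|apply: ltW] => //.
  apply: ge0_ler_powR; [exact: r0|by rewrite nnegrE ltW| |exact: hyc].
  by rewrite nnegrE; apply: mulr_ge0; apply: ltW.
have t2 : v `^ beta / z `^ r <= L2 `^ (beta / 2) * c0 `^ r * X / YE.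
  apply: (@aux2 R (v `^ beta) (z `^ r) (y `^ r) YE Y X) => //.
  - exact: powR_ge0.
  - exact: powR_gt0.
  - exact: powR_ge0.
  - exact: powR_gt0.
have CK0 : 0 <= CK by apply: le_trans ler01 CK1.
apply: le_trans (lerD T1' T2') _.
have u1 : CK * x `^ beta / y `^ r <= CK * (X / YE).
  by rewrite -mulrA; apply: ler_wpM2l.
have u2 : CK * v `^ beta / z `^ r <= CK * (L2 `^ (beta / 2) * c0 `^ r * X / YE).
  by rewrite -mulrA; apply: ler_wpM2l.
apply: le_trans (lerD u1 u2) _.
clearbody X YE.
move: (L2 `^ (beta / 2)) (c0 `^ r) => l c.
rewrite le_eqVlt; apply/orP; left; apply/eqP.
clear; ring.
Qed.
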